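(* Let $n\ge1$, $d=2^n$. For an $n$-qubit density matrix $\rho$ define $\tilde M_2(\rho)=-\log\frac{\sum_{P\in\mathcal{P}_n}\mathrm{tr}(P\rho)^4}{\sum_{P\in\mathcal{P}_n}\mathrm{tr}(P\rho)^2}$ (equivalently $\tilde M_2(\rho)=M_2(\rho)-S_2(\rho)$ with $M_2(\rho)=-\log\big(d\,\mathrm{tr}(Q\rho^{\otimes4})\big)$ and $S_2(\rho)=-\log\mathrm{tr}(\rho^2)$). Then: (i) $\tilde M_2(\rho)=0$ if and only if $\rho$ is a (mixed) stabilizer state; (ii) $\tilde M_2(C\rho C^\dagger)=\tilde M_2(\rho)$ for every $n$-qubit Clifford unitary $C$; (iii) $\tilde M_2(\rho\otimes\sigma)=\tilde M_2(\rho)+\tilde M_2(\sigma)$ for density matrices $\rho,\sigma$ on any numbers of qubits; in particular, if $S$ is a (mixed) stabilizer state then $\tilde M_2(\rho\otimes S)=\tilde M_2(\rho)$.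
   Context: Logarithms are base 2. $\mathcal{P}_n$ is the set of the $4^n$ $n$-qubit Pauli strings $\sigma_1\otimes\cdots\otimes\sigma_n$, $\sigma_i\in\{I,X,Y,Z\}$; $Q=d^{-2}\sum_{P\in\mathcal{P}_n}P^{\otimes4}$. The Clifford group consists of unitaries $C$ with $CPC^\dagger\in\{\pm1,\pm i\}\mathcal{P}_n$ for all $P\in\mathcal{P}_n$. A (mixed) stabilizer state is a positive semidefinite operator of the form $\chi=\frac{I}{d}+\frac1d\sum_{P\in G}\phi_P P$, where $G\subseteq\mathcal{P}_n\setminus\{I\}$ with $0\le|G|\le d-1$ and $\phi_P\in\{-1,+1\}$ (pure stabilizer states are exactly those with $|G|=d-1$). *)

(* Defs.v *)
From HB Require Import structures.
From mathcomp Require Import all_boot all_order all_algebra.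
From mathcomp Require Import complex mxtens.
From mathcomp Require Import reals exp.

Set Implicit Arguments.
Unset Strict Implicit.
Unset Printing Implicit Defensive.

Import Order.TTheory GRing.Theory Num.Theory.
Local Open Scope ring_scope.

Section Qubits.
Variable R : realType.
Local Notation C := R[i].

Definition log2 (x : R) : R := ln x / ln 2.

Definition adj {m k : nat} (A : 'M[C]_(m, k)) : 'M[C]_(k, m) :=
  (map_mx (@conjc R) A)^T.

Definition hermitian {d : nat} (A : 'M[C]_d) : Prop := adj A = A.

Definition psd {d : nat} (A : 'M[C]_d) : Prop :=
  hermitian A /\ forall v : 'cV[C]_d, 0 <= (adj v *m A *m v) 0 0.

Definition density {n : nat} (rho : 'M[C]_(2 ^ n)) : Prop :=
  psd rho /\ \tr rho = 1.

(** single-qubit Paulis, indexed by 'I_4 : 0 = I, 1 = X, 2 = Y, 3 = Z *)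
Definition pauli1 (a : 'I_4) : 'M[C]_2 :=
  \matrix_(i < 2, j < 2)
    match nat_of_ord a, nat_of_ord i, nat_of_ord j with
    | 0, 0, 0 => 1 | 0, 1, 1 => 1
    | 1, 0, 1 => 1 | 1, 1, 0 => 1
    | 2, 0, 1 => - 'i%C | 2, 1, 0 => 'i%C
    | 3, 0, 0 => 1 | 3, 1, 1 => -1
    | _, _, _ => 0
    end.

Fixpoint pauli_seq (s : seq 'I_4) : 'M[C]_(2 ^ size s) :=
  match s return 'M[C]_(2 ^ size s) with
  | [::] => 1%:M
  | a :: s' => castmx (esym (expnS 2 (size s')), esym (expnS 2 (size s')))
                      (pauli1 a *t pauli_seq s')
  end.

Definition pauli {n : nat} (P : n.-tuple 'I_4) : 'M[C]_(2 ^ n) :=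
  castmx (congr1 (expn 2) (size_tuple P), congr1 (expn 2) (size_tuple P))
         (pauli_seq P).

Definition pauliI (n : nat) : n.-tuple 'I_4 := [tuple ord0 | _ < n].

(** tr(P rho), real for Hermitian rho *)
Definition pexp {n : nat} (rho : 'M[C]_(2 ^ n)) (P : n.-tuple 'I_4) : R :=
  complex.Re (\tr (pauli P *m rho)).

Definition M2t (n : nat) (rho : 'M[C]_(2 ^ n)) : R :=
  - log2 ((\sum_(P : n.-tuple 'I_4) pexp rho P ^+ 4) /
          (\sum_(P : n.-tuple 'I_4) pexp rho P ^+ 2)).

Definition stabilizer_state {n : nat} (chi : 'M[C]_(2 ^ n)) : Prop :=
  psd chi /\
  exists (G : {set n.-tuple 'I_4}) (phi : n.-tuple 'I_4 -> C),
    pauliI n \notin G /\ (#|G| <= 2 ^ n - 1)%N /\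
    (forall P, P \in G -> phi P = 1 \/ phi P = -1) /\
    chi = (2 ^ n)%:R^-1 *: (1%:M + \sum_(P in G) phi P *: pauli P).

Definition clifford {n : nat} (U : 'M[C]_(2 ^ n)) : Prop :=
  U *m adj U = 1%:M /\
  forall P : n.-tuple 'I_4, exists (c : C) (Q : n.-tuple 'I_4),
    c \in [:: 1; -1; 'i%C; - 'i%C] /\ U *m pauli P *m adj U = c *: pauli Q.

Definition qtens {m k : nat} (A : 'M[C]_(2 ^ m)) (B : 'M[C]_(2 ^ k))
  : 'M[C]_(2 ^ (m + k)) :=
  castmx (esym (expnD 2 m k), esym (expnD 2 m k)) (A *t B).

End Qubits.

(* Main.v *)
Require Import Defs.
From HB Require Import structures.
From mathcomp Require Import all_boot all_order all_algebra.
From mathcomp Require Import complex mxtens.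
From mathcomp Require Import reals exp.
Import Order.TTheory GRing.Theory Num.Theory.
Local Open Scope ring_scope.
From mathcomp Require Import ring lra zify vector.
Import Order.TTheory GRing.Theory Num.Theory.
Set Implicit Arguments.
Unset Strict Implicit.
Unset Printing Implicit Defensive.

Section P1.
Variable R : realType.
Local Notation C := R[i].

Lemma castmx_irr (T : Type) m n m' n' (e1 e1' : m = m') (e2 e2' : n = n') (A : 'M[T]_(m,n)) :
  castmx (e1,e2) A = castmx (e1',e2') A.
Proof. by rewrite (eq_irrelevance e1 e1') (eq_irrelevance e2 e2'). Qed.

Lemma castmx_id' (T : Type) m n (e1 : m = m) (e2 : n = n) (A : 'M[T]_(m,n)) :
  castmx (e1,e2) A = A.
Proof. by rewrite (eq_irrelevance e1 erefl) (eq_irrelevance e2 erefl) castmx_id. Qed.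

Lemma mxtrace_cast n n' (e e' : n = n') (A : 'M[C]_n) : \tr (castmx (e,e') A) = \tr A.
Proof. by case: n' / e e' => e'; rewrite castmx_id'. Qed.

Lemma mulmx_cast2 n n' (e e' : n = n') (A B : 'M[C]_n) :
  castmx (e,e') A *m castmx (e,e') B = castmx (e,e') (A *m B).
Proof. by case: n' / e e' => e'; rewrite !castmx_id'. Qed.

Lemma mxtrace_tens m n (A : 'M[C]_m) (B : 'M[C]_n) : \tr (A *t B) = \tr A * \tr B.
Proof. by rewrite /mxtrace mulr_sum; apply: eq_bigr => i _; rewrite mxE. Qed.

Lemma adj_mul m n p (A : 'M[C]_(m,n)) (B : 'M[C]_(n,p)) : adj (A *m B) = adj B *m adj A.
Proof. by rewrite /adj map_mxM trmx_mul. Qed.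

Lemma adjK m n (A : 'M[C]_(m,n)) : adj (adj A) = A.
Proof. by apply/matrixP => i j; rewrite !mxE conjcK. Qed.

Lemma adj_cast m n m' n' (e1 : m = m') (e2 : n = n') (A : 'M[C]_(m,n)) :
  adj (castmx (e1,e2) A) = castmx (e2,e1) (adj A).
Proof. by case: m' / e1; case: n' / e2; rewrite !castmx_id. Qed.

Lemma adj_tens m n p q (A : 'M[C]_(m,n)) (B : 'M[C]_(p,q)) : adj (A *t B) = adj A *t adj B.
Proof. by rewrite /adj map_mxT trmx_tens. Qed.

Lemma adj1 n : adj (1%:M : 'M[C]_n) = 1%:M.
Proof. by apply/matrixP => i j; rewrite !mxE conjc_nat eq_sym. Qed.

Lemma adjD m n (A B : 'M[C]_(m,n)) : adj (A + B) = adj A + adj B.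
Proof. by apply/matrixP => i j; rewrite !mxE rmorphD. Qed.

Lemma adjZ m n (c : C) (A : 'M[C]_(m,n)) : adj (c *: A) = (c^*)%C *: adj A.
Proof. by apply/matrixP => i j; rewrite !mxE rmorphM. Qed.

Lemma adj_sum m n I (r : seq I) (P : pred I) (F : I -> 'M[C]_(m,n)) :
  adj (\sum_(i <- r | P i) F i) = \sum_(i <- r | P i) adj (F i).
Proof. by apply: (big_morph _ (@adjD m n)); apply/matrixP => i j; rewrite !mxE conjc0. Qed.

Lemma mxtrace_adj n (A : 'M[C]_n) : \tr (adj A) = ((\tr A)^*)%C.
Proof. rewrite /mxtrace rmorph_sum; apply: eq_bigr => i _; by rewrite !mxE. Qed.

Lemma tensmxA m n p m' n' p' (A : 'M[C]_(m,m')) (B : 'M[C]_(n,n')) (D : 'M[C]_(p,p')) :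
  A *t (B *t D) = castmx (esym (mulnA _ _ _), esym (mulnA _ _ _)) ((A *t B) *t D).
Proof.
apply/matrixP => i j.
case: (mxtens_indexP i) => i1 i23; case: (mxtens_indexP i23) => i2 i3.
case: (mxtens_indexP j) => j1 j23; case: (mxtens_indexP j23) => j2 j3.
rewrite castmxE !tensmxE.
have -> : cast_ord (esym (esym (mulnA m n p))) (mxtens_index (i1, mxtens_index (i2, i3)))
   = mxtens_index (mxtens_index (i1, i2), i3).
  by apply: val_inj => /=; rewrite mulnDl -addnA mulnA.
have -> : cast_ord (esym (esym (mulnA m' n' p'))) (mxtens_index (j1, mxtens_index (j2, j3)))
   = mxtens_index (mxtens_index (j1, j2), j3).
  by apply: val_inj => /=; rewrite mulnDl -addnA mulnA.
by rewrite !tensmxE mulrA.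
Qed.

Lemma tens_cast_l m n m' n' p q (e1 : m = m') (e2 : n = n') (A : 'M[C]_(m,n)) (B : 'M[C]_(p,q)) :
  castmx (e1,e2) A *t B = castmx (congr1 (muln^~ p) e1, congr1 (muln^~ q) e2) (A *t B).
Proof. case: m' / e1; case: n' / e2; by rewrite !castmx_id'. Qed.

Lemma tens_cast_r m n m' n' p q (e1 : m = m') (e2 : n = n') (A : 'M[C]_(m,n)) (B : 'M[C]_(p,q)) :
  B *t castmx (e1,e2) A = castmx (congr1 (muln p) e1, congr1 (muln q) e2) (B *t A).
Proof. case: m' / e1; case: n' / e2; by rewrite !castmx_id'. Qed.

End P1.

Section P2.
Variable R : realType.
Local Notation C := R[i].

Ltac cplx := apply/eqP; rewrite eq_complex /=; apply/andP; split; apply/eqP; ring.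

Lemma pauli1_adj (a : 'I_4) : adj (pauli1 R a) = pauli1 R a.
Proof.
apply/matrixP => i j; rewrite !mxE.
case: a => [[|[|[|[|?]]]] ?] //; case: i => [[|[|?]] ?] //; case: j => [[|[|?]] ?] //=; cplx.
Qed.

Lemma pauli1_sq (a : 'I_4) : pauli1 R a *m pauli1 R a = 1%:M.
Proof.
apply/matrixP => i j; rewrite !mxE !big_ord_recl big_ord0 !mxE.
case: a => [[|[|[|[|?]]]] ?] //; case: i => [[|[|?]] ?] //; case: j => [[|[|?]] ?] //=; cplx.
Qed.

Lemma pauli1_tr (a b : 'I_4) : \tr (pauli1 R a *m pauli1 R b) = (2 * (a == b))%:R.
Proof.
rewrite /mxtrace !big_ord_recl big_ord0 !mxE !big_ord_recl !big_ord0 !mxE.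
case: a => [[|[|[|[|?]]]] ?] //; case: b => [[|[|[|[|?]]]] ?] //=; cplx.
Qed.


Lemma pauli_cons n a (P : n.-tuple 'I_4) :
  pauli R (cons_tuple a P) =
  castmx (esym (expnS 2 n), esym (expnS 2 n)) (pauli1 R a *t pauli R P).
Proof.
rewrite /pauli /=; move: (size_tuple P) (size_tuple (cons_tuple a P)).
case: P => s Hs /= e1; case: n / e1 Hs => Hs e2.
have -> : forall X : 'M[C]_(2^size s), castmx (congr1 (expn 2) (erefl (size s)), congr1 (expn 2) (erefl (size s))) X = X by move=> X; exact: castmx_id'.
rewrite castmx_comp; exact: castmx_irr.
Qed.

Lemma pauli_nil (P : 0.-tuple 'I_4) : pauli R P = 1%:M.
Proof. by rewrite (tuple0 P) /pauli /= castmx_id'. Qed.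


Lemma tens11 m n : (1%:M : 'M[C]_m) *t (1%:M : 'M[C]_n) = 1%:M.
Proof.
apply/matrixP => i j.
case: (mxtens_indexP i) => i1 i2; case: (mxtens_indexP j) => j1 j2.
rewrite tensmxE !mxE (can_eq (@mxtens_indexK _ _)) xpair_eqE.
by case: (i1 == j1); case: (i2 == j2); rewrite /= ?mulr1 ?mulr0 ?mul0r.
Qed.

Lemma castmx1 m n (e e' : m = n) : castmx (e, e') (1%:M : 'M[C]_m) = 1%:M.
Proof. by case: n / e e' => e'; rewrite castmx_id'. Qed.

Lemma pauli_adj n (P : n.-tuple 'I_4) : adj (pauli R P) = pauli R P.
Proof.
elim: n P => [|n IH] P; first by rewrite pauli_nil adj1.
case/tupleP: P => a P; by rewrite pauli_cons adj_cast adj_tens pauli1_adj IH.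
Qed.

Lemma pauli_sq n (P : n.-tuple 'I_4) : pauli R P *m pauli R P = 1%:M.
Proof.
elim: n P => [|n IH] P; first by rewrite pauli_nil; apply: mulmx1.
case/tupleP: P => a P; by rewrite pauli_cons mulmx_cast2 tensmx_mul pauli1_sq IH tens11 castmx1.
Qed.

Lemma pauli_tr n (P Q : n.-tuple 'I_4) :
  \tr (pauli R P *m pauli R Q) = (2 ^ n * (P == Q))%:R.
Proof.
elim: n P Q => [|n IH] P Q.
  by rewrite (tuple0 P) (tuple0 Q) pauli_nil eqxx mul1mx mxtrace1.
case/tupleP: P => a P; case/tupleP: Q => b Q.
rewrite !pauli_cons mulmx_cast2 mxtrace_cast tensmx_mul mxtrace_tens pauli1_tr IH.
rewrite -[cons_tuple a P == _]val_eqE /= eqseq_cons val_eqE -natrM expnS.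
by case: (a == b); case: (P == Q); rewrite /= ?muln0 ?muln1 ?mul0n ?mul1n.
Qed.

Lemma pauliI_cons n : pauliI n.+1 = cons_tuple ord0 (pauliI n).
Proof.
apply: val_inj => /=.
by rewrite enum_ordSl /= -map_comp.
Qed.

Lemma pauli1_0 : pauli1 R ord0 = 1%:M.
Proof.
apply/matrixP => i j; rewrite !mxE.
case: i => [[|[|?]] ?] //; case: j => [[|[|?]] ?] //=.
Qed.

Lemma pauliI_1 n : pauli R (pauliI n) = 1%:M.
Proof.
elim: n => [|n IH]; first by rewrite pauli_nil.
by rewrite pauliI_cons pauli_cons IH pauli1_0 tens11 castmx1.
Qed.

End P2.
Section P2b.
Variable R : realType.
Local Notation C := R[i].

Lemma pauli_cat m k (P : m.-tuple 'I_4) (Q : k.-tuple 'I_4) :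
  pauli R (cat_tuple P Q) = qtens (pauli R P) (pauli R Q).
Proof.
elim: m P => [|m IH] P.
  rewrite (tuple0 P) pauli_nil /qtens tens_scalar1mx castmx_comp /pauli castmx_comp.
  exact: castmx_irr.
case/tupleP: P => a P.
have -> : cat_tuple (cons_tuple a P) Q = cons_tuple a (cat_tuple P Q) :> (m+k).+1.-tuple _
  by apply: val_inj.
rewrite pauli_cons IH /qtens tens_cast_r tensmxA castmx_comp pauli_cons tens_cast_l castmx_comp.
rewrite castmx_comp; exact: castmx_irr.
Qed.

End P2b.

Section P3.
Variable R : realType.
Local Notation C := R[i].
Local Open Scope complex_scope.

Lemma conj_real (t : C) : (t^*)%C = t -> t = (complex.Re t)%:C.
Proof.
case: t => a b /= [h]; congr Complex.
have : b + b = 0 by rewrite -{1}h addNr.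
by move=> ?; lra.
Qed.

Lemma tr_herm_real n (A B : 'M[C]_n) : adj A = A -> adj B = B ->
  \tr (A *m B) = (complex.Re (\tr (A *m B)))%:C.
Proof.
move=> hA hB; apply: conj_real.
by rewrite -mxtrace_adj adj_mul hA hB mxtrace_mulC.
Qed.

Lemma pexpE n (rho : 'M[C]_(2^n)) (P : n.-tuple 'I_4) : adj rho = rho ->
  \tr (pauli R P *m rho) = (pexp rho P)%:C.
Proof. move=> h; rewrite /pexp; exact: tr_herm_real (pauli_adj R P) h. Qed.

Lemma qtens_mul m k (A B : 'M[C]_(2^m)) (D E : 'M[C]_(2^k)) :
  qtens A D *m qtens B E = qtens (A *m B) (D *m E).
Proof. by rewrite /qtens mulmx_cast2 tensmx_mul. Qed.

Lemma qtens_tr m k (A : 'M[C]_(2^m)) (D : 'M[C]_(2^k)) :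
  \tr (qtens A D) = \tr A * \tr D.
Proof. by rewrite /qtens mxtrace_cast mxtrace_tens. Qed.

Lemma qtens_adj m k (A : 'M[C]_(2^m)) (D : 'M[C]_(2^k)) :
  adj (qtens A D) = qtens (adj A) (adj D).
Proof. by rewrite /qtens adj_cast adj_tens. Qed.

Lemma pexp_qtens m k (rho : 'M[C]_(2^m)) (sigma : 'M[C]_(2^k)) P Q :
  adj rho = rho -> adj sigma = sigma ->
  pexp (qtens rho sigma) (cat_tuple P Q) = pexp rho P * pexp sigma Q.
Proof.
move=> h1 h2; rewrite /pexp pauli_cat qtens_mul qtens_tr pexpE // pexpE //.
by rewrite -rmorphM.
Qed.

Lemma sum_cat_tuple m k (F : (m + k).-tuple 'I_4 -> R) :
  \sum_(P : (m+k).-tuple 'I_4) F P =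
  \sum_(P : m.-tuple 'I_4) \sum_(Q : k.-tuple 'I_4) F (cat_tuple P Q).
Proof.
rewrite pair_big /=.
have bij : bijective (fun p : m.-tuple 'I_4 * k.-tuple 'I_4 => cat_tuple p.1 p.2).
  apply: inj_card_bij.
    move=> [P1 Q1] [P2 Q2] /= /(congr1 val) /= /eqP.
    by rewrite eqseq_cat ?size_tuple // => /andP [/eqP/val_inj -> /eqP/val_inj ->].
  by rewrite card_prod !card_tuple card_ord expnD.
rewrite (reindex _ (onW_bij _ bij)) /=.
by apply: eq_bigr => [[P Q]].
Qed.

End P3.

Section P4.
Variable R : realType.
Local Notation C := R[i].
Local Open Scope complex_scope.

Lemma conj_U_mul n (U A B : 'M[C]_n) : adj U *m U = 1%:M ->
  (U *m A *m adj U) *m (U *m B *m adj U) = U *m (A *m B) *m adj U.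
Proof.
move=> hU; rewrite !mulmxA -[U *m A *m adj U *m U]mulmxA hU mulmx1.
by rewrite -!mulmxA.
Qed.

Lemma conj_U_tr n (U A : 'M[C]_n) : adj U *m U = 1%:M ->
  \tr (U *m A *m adj U) = \tr A.
Proof. by move=> hU; rewrite mxtrace_mulC mulmxA hU mul1mx. Qed.

Lemma one_neq0 n : (1%:M : 'M[C]_(2^n)) != 0.
Proof.
apply/eqP => /matrixP /(_ (Ordinal (expn_gt0 2 n)) (Ordinal (expn_gt0 2 n))).
by rewrite !mxE eqxx /= => /eqP; rewrite oner_eq0.
Qed.

Lemma pauli_neq0 n (P : n.-tuple 'I_4) : pauli R P != 0.
Proof.
apply/eqP => h; move: (pauli_sq R P); rewrite h mul0mx => /esym/eqP.
by rewrite (negbTE (one_neq0 n)).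
Qed.

Lemma cl_coef (c : C) : c \in [:: 1; -1; 'i; -'i] -> c^* = c -> c = 1 \/ c = -1.
Proof.
rewrite !inE => /or4P [] /eqP ->; [by left|by right| |];
  move=> /eqP; rewrite eq_complex /= => /andP [_ /eqP h]; exfalso; lra.
Qed.

Lemma clifford_main n (U rho : 'M[C]_(2^n)) : clifford U ->
  (\sum_(P : n.-tuple 'I_4) pexp (U *m rho *m adj U) P ^+ 2 = \sum_P pexp rho P ^+ 2) /\
  (\sum_(P : n.-tuple 'I_4) pexp (U *m rho *m adj U) P ^+ 4 = \sum_P pexp rho P ^+ 4).
Proof.
move=> [hU1 hcl]; have hU := mulmx1C hU1.
have hcl' : forall P : n.-tuple 'I_4, exists Q : n.-tuple 'I_4, exists c : C,
    c \in [:: 1; -1; 'i; -'i] /\ U *m pauli R P *m adj U = c *: pauli R Q.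
  by move=> P; have [c [Q h]] := hcl P; exists Q, c.
have [f hf'] := boolp.choice hcl'.
have hreal : forall P c, c \in [:: 1; -1; 'i; -'i] -> U *m pauli R P *m adj U = c *: pauli R (f P) ->
    c = 1 \/ c = -1.
  move=> P c hc e; apply: cl_coef => //.
  have : adj (U *m pauli R P *m adj U) = U *m pauli R P *m adj U.
    by rewrite !adj_mul adjK pauli_adj mulmxA.
  rewrite e adjZ pauli_adj => /eqP; rewrite -subr_eq0 -scalerBl scaler_eq0.
  by rewrite (negbTE (pauli_neq0 _)) orbF subr_eq0 => /eqP.
have key : forall P, pexp (U *m rho *m adj U) (f P) ^+ 2 = pexp rho P ^+ 2.
  move=> P; have [c [hc e]] := hf' P.
  have htr : c * \tr (pauli R (f P) *m (U *m rho *m adj U)) = \tr (pauli R P *m rho).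
    by rewrite -mxtraceZ scalemxAl -e conj_U_mul // conj_U_tr.
  case: (hreal P c hc e) => hc1; move: htr; rewrite hc1 ?mul1r ?mulN1r /pexp.
    by move=> ->.
  by move=> <-; rewrite raddfN sqrrN.
have finj : injective f.
  move=> P P' hPP'; apply/eqP/negPn/negP => hne.
  have [c [hc e]] := hf' P; have [c' [hc' e']] := hf' P'.
  have hc0 : c != 0 by case: (hreal P c hc e) => ->; rewrite ?oppr_eq0 oner_eq0.
  have hc0' : c' != 0 by case: (hreal P' c' hc' e') => ->; rewrite ?oppr_eq0 oner_eq0.
  have h1 : c' *: (U *m pauli R P *m adj U) = c *: (U *m pauli R P' *m adj U).
    by rewrite e e' hPP' !scalerA mulrC.
  have h2 : c' *: pauli R P = c *: pauli R P'.
    have := congr1 (fun X => adj U *m X *m U) h1.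
    by rewrite /= -!scalemxAr -!scalemxAl !mulmxA hU mul1mx -!mulmxA hU !mulmx1 mul1mx.
  have := congr1 (fun X => \tr (pauli R P *m X)) h2.
  rewrite /= -!scalemxAr !mxtraceZ !pauli_tr eqxx (negbTE hne) muln0 mulr0.
  move/eqP; rewrite mulf_eq0 (negbTE hc0') pnatr_eq0 muln1 expn_eq0 /=.
  done.
split.
  rewrite (reindex_inj finj); apply: eq_bigr => P _; exact: key.
rewrite (reindex_inj finj); apply: eq_bigr => P _.
by rewrite -[4%N]/(2 * 2)%N !exprM key.
Qed.

End P4.

Section P5.
Variable R : realType.
Local Notation C := R[i].
Local Open Scope complex_scope.

Lemma mxtrace_sum n I (r : seq I) (P : pred I) (F : I -> 'M[C]_n) :
  \tr (\sum_(i <- r | P i) F i) = \sum_(i <- r | P i) \tr (F i).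
Proof. by apply: (big_morph _ (@mxtraceD _ _)); rewrite mxtrace0. Qed.

Lemma pauli_zero n (A : 'M[C]_(2^n)) :
  (forall P : n.-tuple 'I_4, \tr (pauli R P *m A) = 0) -> A = 0.
Proof.
move=> hA.
pose N := #|{: n.-tuple 'I_4}|.
pose X : N.-tuple 'M[C]_(2^n) := [tuple pauli R (enum_val i) | i < N].
have hX : forall i : 'I_N, X`_i = pauli R (enum_val i).
  by move=> i; rewrite -tnth_nth tnth_mktuple.
have trX : forall (k : 'I_N -> C) j,
    \tr (pauli R (enum_val j) *m \sum_(i < N) k i *: X`_i) = k j * (2^n)%:R.
  move=> k j; rewrite mulmx_sumr mxtrace_sum (bigD1 j) //= big1 ?addr0.
    by rewrite hX -scalemxAr mxtraceZ pauli_tr eqxx muln1.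
  move=> i hij; rewrite hX -scalemxAr mxtraceZ pauli_tr.
  by rewrite (inj_eq enum_val_inj) eq_sym (negbTE hij) muln0 mulr0.
have freeX : free X.
  apply/freeP => k hk j; have := trX k j; rewrite hk mulmx0 mxtrace0 => /esym/eqP.
  by rewrite mulf_eq0 pnatr_eq0 expn_eq0 /= orbF => /eqP.
have bX : basis_of fullv X.
  rewrite basisEfree freeX subvf size_tuple dimvf /= /dim /=.
  by rewrite /N card_tuple card_ord -expnMn.
have Amem : A \in <<X>>%VS by rewrite (span_basis bX) memvf.
rewrite (coord_span Amem); apply: big1 => j _.
have := trX (fun i => coord X i A) j; rewrite -(coord_span Amem) hA => /esym/eqP.
rewrite mulf_eq0 pnatr_eq0 expn_eq0 /= orbF => /eqP ->; exact: scale0r.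
Qed.

Lemma pauli_complete n (A : 'M[C]_(2^n)) :
  A = (2^n)%:R^-1 *: \sum_(P : n.-tuple 'I_4) \tr (pauli R P *m A) *: pauli R P.
Proof.
apply/eqP; rewrite -subr_eq0; apply/eqP; apply: pauli_zero => Q.
rewrite mulmxBr raddfB /= -scalemxAr mxtraceZ mulmx_sumr mxtrace_sum.
rewrite (bigD1 Q) //= big1 ?addr0.
  rewrite -scalemxAr mxtraceZ pauli_tr eqxx muln1 mulrCA mulVf ?mulr1 ?subrr //.
  by rewrite pnatr_eq0 expn_eq0.
move=> P hPQ; rewrite -scalemxAr mxtraceZ pauli_tr eq_sym (negbTE hPQ) muln0 mulr0 //.
Qed.

End P5.

Section P6.
Variable R : realType.
Local Notation C := R[i].
Local Open Scope complex_scope.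

Lemma quad (a b s : R) : 0 <= a -> 0 <= b -> 0 <= s ->
  (forall t, 0 <= a - 2 * t * s + t ^+ 2 * b * s) -> s <= a * b.
Proof.
move=> ha hb hs H.
have [s0|spos] := eqVneq s 0; first by rewrite s0 mulr_ge0.
have spos' : 0 < s by rewrite lt_def spos hs.
have [b0|bpos] := eqVneq b 0.
  have := H ((a + 1) / (2 * s)); rewrite b0 mulr0 mul0r addr0.
  have -> : 2 * ((a + 1) / (2 * s)) * s = a + 1.
    by field; exact: spos.
  move=> h; exfalso; lra.
have bpos' : 0 < b by rewrite lt_def bpos hb.
have := H b^-1.
have -> : a - 2 * b^-1 * s + b^-1 ^+ 2 * b * s = (a * b - s) / b by field.
by rewrite pmulr_lge0 ?invr_gt0 // subr_ge0.
Qed.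

Lemma cs_aux (a b r : C) :
  (forall y : C, 0 <= a + y * r + y^* * r^* + y^* * y * b) -> 0 <= a -> 0 <= b ->
  complex.Re r ^+ 2 + complex.Im r ^+ 2 <= complex.Re a * complex.Re b.
Proof.
case: a => a1 a2; case: b => b1 b2; case: r => x y /= H.
rewrite !lecE /= => /andP [_ ha] /andP [_ hb].
apply: quad => //; first by rewrite addr_ge0 // sqr_ge0.
move=> t; move: (H (Complex (- t * x) (t * y))); rewrite lecE /= => /andP [_].
move=> h; nra.
Qed.


Lemma adj_col n (A : 'M[C]_n) j : adj (col j A) = row j (adj A).
Proof. by apply/matrixP => a b; rewrite !mxE. Qed.

Lemma row_col_entry m n p (M : 'M[C]_(m,n)) (N : 'M[C]_(n,p)) j k :
  (row j M *m col k N) 0 0 = (M *m N) j k.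
Proof. by rewrite !mxE; apply: eq_bigr => l _; rewrite !mxE. Qed.

Lemma qform_ent n (rho : 'M[C]_n) j k :
  (adj (col j 1%:M) *m rho *m col k 1%:M) 0 0 = rho j k.
Proof. by rewrite adj_col adj1 -row_mul row_col_entry mul1mx mulmx1. Qed.

Lemma qform_add n (rho : 'M[C]_n) (u w : 'cV[C]_n) (y : C) :
  (adj (u + y *: w) *m rho *m (u + y *: w)) 0 0 =
  (adj u *m rho *m u) 0 0 + y * (adj u *m rho *m w) 0 0
  + y^* * (adj w *m rho *m u) 0 0 + y^* * y * (adj w *m rho *m w) 0 0.
Proof.
rewrite adjD adjZ !mulmxDl !mulmxDr -!scalemxAl -!scalemxAr !mxE.
ring.
Qed.

Lemma herm_ent n (rho : 'M[C]_n) j k : adj rho = rho -> rho k j = (rho j k)^*.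
Proof. by move=> h; rewrite -{1}h !mxE. Qed.

Lemma psd_diag n (rho : 'M[C]_n) j : psd rho -> 0 <= rho j j.
Proof. by case=> _ h; move: (h (col j 1%:M)); rewrite qform_ent. Qed.

Lemma psd_cs n (rho : 'M[C]_n) j k : psd rho ->
  complex.Re (rho j k) ^+ 2 + complex.Im (rho j k) ^+ 2 <=
  complex.Re (rho j j) * complex.Re (rho k k).
Proof.
move=> hp; have [hh hq] := hp.
apply: cs_aux; last 2 first.
- exact: psd_diag.
- exact: psd_diag.
move=> y; move: (hq (col j 1%:M + y *: col k 1%:M)).
by rewrite qform_add !qform_ent (herm_ent j k hh).
Qed.

Lemma psd_trAA n (rho A : 'M[C]_n) : psd rho -> adj A = A -> 0 <= \tr (A *m rho *m A).
Proof.
move=> [_ hq] hA; rewrite /mxtrace; apply: sumr_ge0 => j _.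
by rewrite -row_col_entry row_mul -{1}hA -adj_col.
Qed.

Lemma ReD (x y : C) : complex.Re (x + y) = complex.Re x + complex.Re y.
Proof. by case: x; case: y. Qed.

Lemma Re_sum I (r : seq I) (P : pred I) (F : I -> C) :
  complex.Re (\sum_(i <- r | P i) F i) = \sum_(i <- r | P i) complex.Re (F i).
Proof. by apply: (big_morph _ ReD). Qed.

End P6.

Section P7.
Variable R : realType.
Local Notation C := R[i].
Local Open Scope complex_scope.

Lemma adjN m n (A : 'M[C]_(m,n)) : adj (- A) = - adj A.
Proof. by apply/matrixP => i j; rewrite !mxE rmorphN. Qed.

Lemma ReN (x : C) : complex.Re (- x) = - complex.Re x.
Proof. by case: x. Qed.

Lemma pexp_I n (rho : 'M[C]_(2^n)) : \tr rho = 1 -> pexp rho (pauliI n) = 1.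
Proof. by move=> h; rewrite /pexp pauliI_1 mul1mx h. Qed.

Lemma pexp_bound n (rho : 'M[C]_(2^n)) P : density rho -> -1 <= pexp rho P <= 1.
Proof.
move=> [hp htr]; have hh := hp.1.
have e := pexpE P hh.
have a1 : adj (1%:M + pauli R P) = 1%:M + pauli R P by rewrite adjD adj1 pauli_adj.
have h1 := psd_trAA hp a1.
have a2 : adj (1%:M - pauli R P) = 1%:M - pauli R P by rewrite adjD adjN adj1 pauli_adj.
have h2 := psd_trAA hp a2.
move: h1; rewrite mxtrace_mulC mulmxA mulmxDl !mulmxDr mul1mx mulmx1 pauli_sq.
rewrite !mulmxDl !mxtraceD mul1mx htr e lecE /= => /andP [_ h1].
move: h2; rewrite mxtrace_mulC mulmxA mulmxBl !mulmxBr mul1mx mulmx1 pauli_sq.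
rewrite !mulmxBl !raddfB /= mul1mx htr e lecE /= => /andP [_ h2].
move: h1 h2; rewrite !mul1mx e !ReD !ReN /= => h1 h2.
apply/andP; split; lra.
Qed.

Lemma pexp_sq_le1 n (rho : 'M[C]_(2^n)) P : density rho -> pexp rho P ^+ 2 <= 1.
Proof. move=> /(pexp_bound P) /andP [h1 h2]; nra. Qed.


Lemma trsq_le1 n (rho : 'M[C]_(2^n)) : density rho -> complex.Re (\tr (rho *m rho)) <= 1.
Proof.
move=> [hp htr]; have hh := hp.1.
have -> : complex.Re (\tr (rho *m rho)) =
    \sum_j \sum_k (complex.Re (rho j k) ^+ 2 + complex.Im (rho j k) ^+ 2).
  rewrite /mxtrace Re_sum; apply: eq_bigr => j _; rewrite mxE Re_sum.
  apply: eq_bigr => k _; rewrite (herm_ent j k hh); case: (rho j k) => x y /=; ring.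
apply: (@le_trans _ _ (\sum_j \sum_k complex.Re (rho j j) * complex.Re (rho k k))).
  apply: ler_sum => j _; apply: ler_sum => k _; exact: psd_cs.
have -> : \sum_j \sum_k complex.Re (rho j j) * complex.Re (rho k k) =
    (complex.Re (\tr rho)) ^+ 2.
  by rewrite /mxtrace Re_sum expr2 mulr_suml; apply: eq_bigr => j _; rewrite mulr_sumr.
by rewrite htr /= expr1n.
Qed.

Lemma sum_sq n (rho : 'M[C]_(2^n)) : adj rho = rho ->
  \sum_(P : n.-tuple 'I_4) pexp rho P ^+ 2 = (2^n)%:R * complex.Re (\tr (rho *m rho)).
Proof.
move=> hh.
have e := pauli_complete rho.
have -> : \tr (rho *m rho) =
    ((2^n)%:R^-1 * \sum_(P : n.-tuple 'I_4) (pexp rho P ^+ 2))%:C.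
  rewrite {2}e -scalemxAr mxtraceZ mulmx_sumr mxtrace_sum rmorphM rmorph_sum fmorphV rmorph_nat.
  congr (_ * _); apply: eq_bigr => P _.
  by rewrite -scalemxAr mxtraceZ (mxtrace_mulC rho) (pexpE P hh) -rmorphM expr2.
rewrite /= mulrA mulfV ?mul1r // pnatr_eq0 expn_eq0 //.
Qed.

End P7.

Section P8.
Variable R : realType.
Local Notation C := R[i].
Local Open Scope complex_scope.

Definition S2 n (rho : 'M[C]_(2^n)) := \sum_(P : n.-tuple 'I_4) pexp rho P ^+ 2.
Definition S4 n (rho : 'M[C]_(2^n)) := \sum_(P : n.-tuple 'I_4) pexp rho P ^+ 4.

Lemma S_ge1 n (rho : 'M[C]_(2^n)) : \tr rho = 1 -> 1 <= S2 rho /\ 1 <= S4 rho.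
Proof.
move=> htr; split; rewrite /S2 /S4 (bigD1 (pauliI n)) //= pexp_I // expr1n lerDl;
  apply: sumr_ge0 => P _.
  exact: sqr_ge0.
by rewrite -[4%N]/(2 * 2)%N exprM sqr_ge0.
Qed.

Lemma M2t_eq0 n (rho : 'M[C]_(2^n)) : \tr rho = 1 -> (M2t rho = 0 <-> S4 rho = S2 rho).
Proof.
move=> htr; have [h2 h4] := S_ge1 htr.
have p2 : 0 < S2 rho by apply: lt_le_trans h2.
have p4 : 0 < S4 rho by apply: lt_le_trans h4.
have n2 : S2 rho != 0 by rewrite gt_eqF.
have l2 : 0 < ln (2 : R) by apply: ln_gt0; rewrite ltr1n.
rewrite /M2t -/(S2 rho) -/(S4 rho) /log2; split.
  move/eqP; rewrite oppr_eq0 mulf_eq0 invr_eq0 (gt_eqF l2) orbF ln_eq0 ?divr_gt0 //.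
  by move/eqP => h; rewrite -[S4 rho](divfK n2) h mul1r.
by move=> ->; rewrite divff // ln1 mul0r oppr0.
Qed.

Lemma S_qtens m k (rho : 'M[C]_(2^m)) (sigma : 'M[C]_(2^k)) :
  adj rho = rho -> adj sigma = sigma ->
  S2 (qtens rho sigma) = S2 rho * S2 sigma /\ S4 (qtens rho sigma) = S4 rho * S4 sigma.
Proof.
move=> h1 h2; rewrite /S2 /S4 !sum_cat_tuple !mulr_suml; split;
  apply: eq_bigr => P _; rewrite mulr_sumr; apply: eq_bigr => Q _;
  by rewrite pexp_qtens // exprMn.
Qed.

Lemma M2t_tens m k (rho : 'M[C]_(2^m)) (sigma : 'M[C]_(2^k)) :
  density rho -> density sigma -> M2t (qtens rho sigma) = M2t rho + M2t sigma.
Proof.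
move=> [[h1 _] t1] [[h2 _] t2].
have [a2 a4] := S_ge1 t1; have [b2 b4] := S_ge1 t2.
have [e2 e4] := S_qtens h1 h2.
have g1 : forall x : R, 1 <= x -> 0 < x by move=> x hx; apply: lt_le_trans ltr01 hx.
have q1 : S4 rho / S2 rho \in Num.pos by rewrite posrE divr_gt0 ?g1.
have q2 : S4 sigma / S2 sigma \in Num.pos by rewrite posrE divr_gt0 ?g1.
rewrite /M2t -!/(S2 _) -!/(S4 _) e2 e4 /log2 -mulf_div (lnM q1 q2).
by rewrite mulrDl opprD.
Qed.

End P8.

Section P9.
Variable R : realType.
Local Notation C := R[i].
Local Open Scope complex_scope.

Lemma stab_S n (rho : 'M[C]_(2^n)) : stabilizer_state rho -> S4 rho = S2 rho.
Proof.
case=> _ [G [phi [hI [_ [hphi erho]]]]].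
rewrite /S4 /S2; apply: eq_bigr => Q _.
have d0 : ((2^n)%:R : C) != 0 by rewrite pnatr_eq0 expn_eq0.
have htr : \tr (pauli R Q *m rho) =
    (Q == pauliI n)%:R + (Q \in G)%:R * phi Q.
  rewrite erho -scalemxAr mxtraceZ mulmxDr mulmx_sumr mxtraceD mxtrace_sum.
  rewrite -(pauliI_1 R n) pauli_tr.
  have -> : \sum_(i in G) \tr (pauli R Q *m (phi i *: pauli R i)) =
      (Q \in G)%:R * phi Q * (2^n)%:R.
    case hQ: (Q \in G).
      rewrite (bigD1 Q) //= big1 ?addr0.
        by rewrite -scalemxAr mxtraceZ pauli_tr eqxx muln1 mul1r.
      move=> P /andP [_ hPQ]; rewrite -scalemxAr mxtraceZ pauli_tr eq_sym.
      by rewrite (negbTE hPQ) muln0 mulr0.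
    rewrite big1 ?mul0r // => P hP; rewrite -scalemxAr mxtraceZ pauli_tr.
    have -> : (Q == P) = false by apply/eqP => eQP; rewrite eQP hP in hQ.
    by rewrite muln0 mulr0.
  by rewrite natrM [(2^n)%:R * _]mulrC -mulrDl mulrCA mulVf // mulr1.
have hp : pexp rho Q = 0 \/ pexp rho Q = 1 \/ pexp rho Q = -1.
  rewrite /pexp htr; case: eqP => [eQ|_].
    have -> : (Q \in G) = false by rewrite eQ (negbTE hI).
    by right; left; rewrite mul0r addr0.
  case hQ: (Q \in G); last by left; rewrite mul0r add0r.
  by right; rewrite mul1r add0r; case: (hphi Q hQ) => ->; [left|right].
case: hp => [->|[->|->]].
- by rewrite !expr0n.
- by rewrite !expr1n.
- by rewrite -[4%N]/(2 * 2)%N exprM sqrrN !expr1n.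
Qed.


Lemma S_to_stab n (rho : 'M[C]_(2^n)) : density rho -> S4 rho = S2 rho -> stabilizer_state rho.
Proof.
move=> hd heq; have [hp htr] := hd; have hh := hp.1.
have hz : forall P, pexp rho P = 0 \/ pexp rho P ^+ 2 = 1.
  move=> P.
  have h0 : \sum_(P : n.-tuple 'I_4) (pexp rho P ^+ 2 - pexp rho P ^+ 4) = 0.
    by rewrite sumrB -/(S2 rho) -/(S4 rho) heq subrr.
  have hge : forall P : n.-tuple 'I_4, true -> 0 <= pexp rho P ^+ 2 - pexp rho P ^+ 4.
    move=> P' _; have := pexp_sq_le1 P' hd.
    rewrite -[4%N]/(2 * 2)%N exprM; move: (sqr_ge0 (pexp rho P')).
    set q := pexp rho P' ^+ 2 => *; nra.
  have := psumr_eq0P hge h0 (i := P) isT.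
  rewrite -[4%N]/(2 * 2)%N exprM; set q := pexp rho P ^+ 2 => hq.
  have : q * (1 - q) == 0 by apply/eqP; rewrite -hq; ring.
  rewrite mulf_eq0 subr_eq0 => /orP [|/eqP <-]; last by right.
  by rewrite expf_eq0 /= => /eqP; left.
pose G := [set P : n.-tuple 'I_4 | (P != pauliI n) && (pexp rho P != 0)].
have hG : forall P, (P \in pauliI n |: G) = (pexp rho P != 0).
  move=> P; rewrite in_setU1 inE; case: eqP => [->|] //=.
  by rewrite pexp_I // oner_eq0.
have sumG : \sum_(P : n.-tuple 'I_4) pexp rho P ^+ 2 = #|pauliI n |: G|%:R.
  rewrite -sumr_const [RHS]big_mkcond; apply: eq_bigr => P _; rewrite hG.
  by case: (hz P) => [->|h]; rewrite ?eqxx ?expr0n //= h; case: eqP => // e; rewrite e expr0n in h.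
have card : (#|G| <= 2 ^ n - 1)%N.
  have h1 := sum_sq hh; have h2 := trsq_le1 hd.
  have : (#|pauliI n |: G|%:R : R) <= (2 ^ n)%:R.
    rewrite -sumG h1 -[X in _ <= X]mulr1 ler_wpM2l //.
  rewrite ler_nat cardsU1 inE eqxx /=; lia.
split => //; exists G, (fun P => (pexp rho P)%:C); split; [|split; [|split]].
- by rewrite inE eqxx.
- exact: card.
- move=> P; rewrite inE => /andP [_ hP]; case: (hz P) => [h|]; first by rewrite h eqxx in hP.
  move/eqP; rewrite sqrf_eq1 => /orP [] /eqP ->; [left|right]; by rewrite ?rmorphN rmorph1.
rewrite {1}(pauli_complete rho); congr (_ *: _).
under eq_bigr => P _ do rewrite (pexpE P hh).
rewrite (bigD1 (pauliI n)) //= pexp_I // pauliI_1 scale1r; congr (_ + _).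
rewrite big_mkcond [RHS]big_mkcond; apply: eq_bigr => P _; rewrite inE.
case: (P != pauliI n) => //=; case: eqP => [->|] //=.
by rewrite scale0r.
Qed.

Lemma M2t_zero_iff n (rho : 'M[C]_(2^n)) : density rho -> (M2t rho = 0 <-> stabilizer_state rho).
Proof.
move=> hd; rewrite (M2t_eq0 hd.2); split; first exact: S_to_stab.
exact: stab_S.
Qed.

End P9.

Unset Implicit Arguments.
Set Strict Implicit.
Set Printing Implicit Defensive.

Theorem mainTheorem4 (R : realType) :
  (* (i) *)
  (forall (n : nat), (0 < n)%N ->
     forall rho : 'M[R[i]]_(2 ^ n), density rho ->
       (M2t rho = 0 <-> stabilizer_state rho)) /\
  (* (ii) *)
  (forall (n : nat), (0 < n)%N ->
     forall U rho : 'M[R[i]]_(2 ^ n), clifford U -> density rho ->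
       M2t (U *m rho *m adj U) = M2t rho) /\
  (* (iii) *)
  (forall (m k : nat), (0 < m)%N -> (0 < k)%N ->
     forall (rho : 'M[R[i]]_(2 ^ m)) (sigma : 'M[R[i]]_(2 ^ k)),
       density rho -> density sigma ->
       M2t (qtens rho sigma) = M2t rho + M2t sigma /\
       (stabilizer_state sigma -> M2t (qtens rho sigma) = M2t rho)).
Proof.
split; first by move=> n _ rho hd; exact: M2t_zero_iff.
split.
  move=> n _ U rho hU _; have [e2 e4] := clifford_main rho hU.
  by rewrite /M2t e2 e4.
move=> m k _ _ rho sigma h1 h2; have e := M2t_tens h1 h2; split => // hs.
by rewrite e (proj2 (M2t_zero_iff h2) hs) addr0.
Qed.
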